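(* In the setting of the context, regard the error exponent $K=K(a)$ as a function of $a\in[0,1]$ with $\Pi_0,\sigma^2$ fixed. If $\Gamma=\Pi_0/\sigma^2<1$, then there exists $a_m\in(0,1)$ at which $K$ attains its maximum over $[0,1]$, and $a_m$ is a solution of the equation $$[1+a^2+\Gamma(1-a^2)]^2-2\Big(r_e+\frac{a^4}{r_e}\Big)=0,\qquad r_e=R_e/\sigma^2,$$ where $R_e=P+\sigma^2$ with $P=\frac{\sqrt{[\sigma^2(1-a^2)-Q]^2+4\sigma^2Q}-\sigma^2(1-a^2)+Q}{2}$ and $Q=\Pi_0(1-a^2)$. Moreover, $a_m\to1$ as $\Gamma\to0$. Consequently, for the sampled diffusion with $a=e^{-A\Delta}$ ($A>0$), the optimal sensor spacing is $\Delta^*=-\log(a_m)/A$.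
   Context: Model: fix $a\in[0,1]$, $\Pi_0>0$, $\sigma^2>0$. The signal is a stationary Gaussian first-order autoregressive sequence $s_{i+1}=a s_i+u_i$, $i\ge1$, with $s_1\sim\mathcal N(0,\Pi_0)$ and $u_i$ i.i.d. $\mathcal N(0,Q)$, $Q=\Pi_0(1-a^2)$, independent of $s_1$. Observations follow $H_0: y_i=w_i$ or $H_1: y_i=s_i+w_i$, $w_i$ i.i.d. $\mathcal N(0,\sigma^2)$ independent of the signal; $\Gamma=\Pi_0/\sigma^2$ is the SNR. In the sensor application the samples come from a stationary diffusion $ds/dx=-As(x)+Bu(x)$ sampled at spacing $\Delta$, giving $a=e^{-A\Delta}$. The error exponent $K$ is $-\lim_{n\to\infty}\frac1n\log P_M(n)$, where $P_M(n)$ is the miss probability of the level-$\alpha$ Neyman–Pearson detector based on $y_1,\dots,y_n$ (independent of $\alpha\in(0,1)$); explicitly $K=\frac{1}{2\pi}\int_0^{2\pi} D(\mathcal N(0,\sigma^2)\|\mathcal N(0,S_y(\omega)))\,d\omega$ with $S_y(\omega)=\sigma^2+\frac{\Pi_0(1-a^2)}{1-2a\cos\omega+a^2}$, $D$ the Kullback–Leibler divergence. *)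

(* Defs.v *)
From Stdlib Require Import Reals.
From Coquelicot Require Import Coquelicot.
Open Scope R_scope.

(* Power spectral density of y under H1:
   S_y(w) = sigma2 + Pi0 (1-a^2) / (1 - 2 a cos w + a^2). *)
Definition Sy (Pi0 sigma2 a w : R) : R :=
  sigma2 + Pi0 * (1 - a ^ 2) / (1 - 2 * a * cos w + a ^ 2).

(* Kullback-Leibler divergence D(N(0,s1) || N(0,s2)) between centred
   Gaussians with variances s1, s2 > 0. *)
Definition KL_gauss (s1 s2 : R) : R :=
  / 2 * (s1 / s2 - 1 - ln (s1 / s2)).

Definition Kexp (Pi0 sigma2 a : R) : R :=
  / (2 * PI) * RInt (fun w => KL_gauss sigma2 (Sy Pi0 sigma2 a w)) 0 (2 * PI).

Definition Qv (Pi0 a : R) : R := Pi0 * (1 - a ^ 2).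

Definition Pv (Pi0 sigma2 a : R) : R :=
  (sqrt ((sigma2 * (1 - a ^ 2) - Qv Pi0 a) ^ 2 + 4 * sigma2 * Qv Pi0 a)
   - sigma2 * (1 - a ^ 2) + Qv Pi0 a) / 2.

Definition Re_v (Pi0 sigma2 a : R) : R := Pv Pi0 sigma2 a + sigma2.
Definition re_v (Pi0 sigma2 a : R) : R := Re_v Pi0 sigma2 a / sigma2.

Definition opt_eq_lhs (Pi0 sigma2 a : R) : R :=
  (1 + a ^ 2 + (Pi0 / sigma2) * (1 - a ^ 2)) ^ 2
  - 2 * (re_v Pi0 sigma2 a + a ^ 4 / re_v Pi0 sigma2 a).

(* Main.v *)
Require Import Defs.
From Stdlib Require Import Reals Lra Lia ZArith.
From Coquelicot Require Import Coquelicot.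
Open Scope R_scope.

Definition Dq (b w : R) : R := 1 - 2 * b * cos w + b ^ 2.

Lemma Dq_bounds b w : -1 < b < 1 ->
  (1 - Rabs b) ^ 2 <= Dq b w <= (1 + Rabs b) ^ 2.
Proof.
intros Hb. unfold Dq.
assert (Hcc := COS_bound w).
assert (H1 : Rabs (b * cos w) <= Rabs b).
{ rewrite Rabs_mult. assert (Rabs (cos w) <= 1) by (apply Rabs_le; lra).
  assert (0 <= Rabs b) by apply Rabs_pos. nra. }
pose proof (Rle_abs (b*cos w)) as H3. pose proof (Rle_abs (-(b*cos w))) as H4.
rewrite Rabs_Ropp in H4.
assert (Rabs b ^ 2 = b ^ 2) by (rewrite RPow_abs; apply Rabs_pos_eq; nra).
split; nra.
Qed.

Lemma Dq_pos b w : -1 < b < 1 -> 0 < Dq b w.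
Proof.
intros Hb. destruct (Dq_bounds b w Hb) as [H _].
assert (Rabs b < 1) by (apply Rabs_def1; lra). nra.
Qed.

Lemma pois_der (b w : R) : -1 < b < 1 ->
  is_derive (fun w => (w + 2 * atan (b * sin w / (1 - b * cos w))) / (1 - b^2)) w
    (/ Dq b w).
Proof.
intros Hb. unfold Dq.
assert (Hcc := COS_bound w).
assert (Hc : 0 < 1 - b * cos w).
{ assert (Rabs (b * cos w) < 1).
  rewrite Rabs_mult. assert (Rabs (cos w) <= 1) by (apply Rabs_le; lra).
  assert (Rabs b < 1) by (apply Rabs_def1; lra).
  assert (0 <= Rabs b) by apply Rabs_pos. nra.
  apply Rabs_def2 in H. lra. }
assert (HS : sin w * sin w = 1 - cos w * cos w) by (pose proof (sin2 w); unfold Rsqr in *; lra).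
assert (HD : 0 < 1 - 2 * b * cos w + b^2) by nra.
auto_derive.
- lra.
- revert HS Hc HD. generalize (cos w) (sin w). intros C S HS Hc HD.
  assert (Hb2 : 1 - b * (b*1) <> 0) by nra.
  assert (H1 : 1 + b * S * / (1 + - (b * C)) * (b * S * / (1 + - (b * C)) * 1)
     = (1 - 2 * b * C + b ^ 2) / ((1 - b*C)*(1-b*C))).
  { field_simplify_eq; [| lra]. replace (S^2) with (S*S) by ring. rewrite HS. ring. }
  rewrite H1. field_simplify_eq; [| repeat split; lra].
  replace (S^2) with (1 - C*C) by (rewrite <- HS; ring). ring.
Qed.

Lemma Dq_inv_cont b x : -1 < b < 1 -> continuous (fun w => / Dq b w) x.
Proof.
intros Hb. apply (@ex_derive_continuous R_AbsRing R_NormedModule). unfold Dq.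
assert (H := Dq_pos b x Hb). unfold Dq in H.
auto_derive. lra.
Qed.

Lemma Dq_ln_cont b x : -1 < b < 1 -> continuous (fun w => ln (Dq b w)) x.
Proof.
intros Hb. apply (@ex_derive_continuous R_AbsRing R_NormedModule). unfold Dq.
assert (H := Dq_pos b x Hb). unfold Dq in H.
auto_derive. lra.
Qed.

Lemma pois b : -1 < b < 1 ->
  is_RInt (fun w => / Dq b w) 0 (2 * PI) (2 * PI / (1 - b ^ 2)).
Proof.
intros Hb.
set (F := fun w => (w + 2 * atan (b * sin w / (1 - b * cos w))) / (1 - b^2)).
assert (H := is_RInt_derive F (fun w => / Dq b w) 0 (2 * PI)
   (fun x _ => pois_der b x Hb) (fun x _ => Dq_inv_cont b x Hb)).
replace (2 * PI / (1 - b ^ 2)) with (minus (F (2 * PI)) (F 0)); [exact H|].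
unfold F, minus, plus, opp; simpl.
rewrite sin_2PI, sin_0. unfold Rdiv. rewrite !Rmult_0_r, !Rmult_0_l, atan_0. ring.
Qed.

Lemma ex_RInt_cont f a b : (forall x, continuous f x) -> @ex_RInt R_CompleteNormedModule f a b.
Proof. intros Hf. apply ex_RInt_continuous. intros; apply Hf. Qed.

Lemma comp_lin_R (f : R -> R) u v a b : (forall x, continuous f x) ->
  RInt (fun y => u * f (u * y + v)) a b = RInt f (u * a + v) (u * b + v).
Proof.
intros Hc. rewrite <- (RInt_comp_lin f u v a b (ex_RInt_cont f _ _ Hc)). reflexivity.
Qed.

Lemma RInt_scal_R (f : R -> R) k a b : ex_RInt f a b ->
  RInt (fun x => k * f x) a b = k * RInt f a b.
Proof. intros H. apply (RInt_scal f a b k H). Qed.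

Lemma RInt_shift (f : R -> R) h : (forall x, continuous f x) ->
  (forall x, f (x + 2 * PI) = f x) ->
  RInt (fun w => f (w + h)) 0 (2 * PI) = RInt f 0 (2 * PI).
Proof.
intros Hc Hp.
assert (E1 := comp_lin_R f 1 h 0 (2 * PI) Hc).
rewrite (RInt_ext (fun y => 1 * f (1 * y + h)) (fun w => f (w + h))) in E1.
2:{ intros x _. rewrite Rmult_1_l. f_equal. ring. }
rewrite E1.
replace (1 * 0 + h) with h by ring. replace (1 * (2 * PI) + h) with (2 * PI + h) by ring.
rewrite <- (RInt_Chasles f h (2 * PI) (2 * PI + h)) by apply ex_RInt_cont, Hc.
assert (E2 := comp_lin_R f 1 (2 * PI) 0 h Hc).
replace (1 * 0 + 2 * PI) with (2 * PI) in E2 by ring.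
replace (1 * h + 2 * PI) with (2 * PI + h) in E2 by ring.
rewrite <- E2.
rewrite (RInt_ext (fun y => 1 * f (1 * y + 2 * PI)) f).
2:{ intros x _. rewrite Rmult_1_l. rewrite <- (Hp x). f_equal. ring. }
rewrite <- (RInt_Chasles f 0 h (2 * PI)) by apply ex_RInt_cont, Hc.
unfold plus; simpl. ring.
Qed.

Lemma RInt_double (f : R -> R) : (forall x, continuous f x) ->
  (forall x, f (x + 2 * PI) = f x) ->
  RInt (fun w => f (2 * w)) 0 (2 * PI) = RInt f 0 (2 * PI).
Proof.
intros Hc Hp.
assert (Hc2 : forall x, continuous (fun w => f (2 * w)) x).
{ intros x. apply (continuous_comp (fun w => 2 * w) f). apply (@ex_derive_continuous R_AbsRing R_NormedModule). auto_derive. auto. apply Hc. }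
assert (E1 := comp_lin_R f 2 0 0 (2 * PI) Hc).
rewrite (RInt_ext (fun y => 2 * f (2 * y + 0)) (fun y => 2 * (f (2 * y)))) in E1.
2:{ intros x _. f_equal. f_equal. ring. }
rewrite RInt_scal_R in E1 by apply ex_RInt_cont, Hc2.
replace (2 * 0 + 0) with 0 in E1 by ring.
replace (2 * (2 * PI) + 0) with (2 * PI + 2 * PI) in E1 by ring.
rewrite <- (RInt_Chasles f 0 (2 * PI) (2 * PI + 2 * PI)) in E1 by apply ex_RInt_cont, Hc.
assert (E2 := comp_lin_R f 1 (2 * PI) 0 (2 * PI) Hc).
replace (1 * 0 + 2 * PI) with (2 * PI) in E2 by ring.
replace (1 * (2 * PI) + 2 * PI) with (2 * PI + 2 * PI) in E2 by ring.
rewrite <- E2 in E1.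
rewrite (RInt_ext (fun y => 1 * f (1 * y + 2 * PI)) f) in E1.
2:{ intros x _. rewrite Rmult_1_l. rewrite <- (Hp x). f_equal. ring. }
unfold scal, plus in E1; simpl in E1. unfold mult in E1; simpl in E1. lra.
Qed.

Lemma Dq_period b x : Dq b (x + 2 * PI) = Dq b x.
Proof. unfold Dq. rewrite cos_plus, cos_2PI, sin_2PI. f_equal. f_equal. ring. Qed.

Lemma Dq_prod b w : Dq b w * Dq b (w + PI) = Dq (b ^ 2) (2 * w).
Proof. unfold Dq. rewrite neg_cos, cos_2a_cos. ring. Qed.

Lemma RInt_plus_R (f g : R -> R) a b : ex_RInt f a b -> ex_RInt g a b ->
  RInt (fun x => f x + g x) a b = RInt f a b + RInt g a b.
Proof. intros H1 H2. apply (RInt_plus f g a b H1 H2). Qed.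

Definition LI b : R := RInt (fun w => ln (Dq b w)) 0 (2 * PI).

Lemma L_half b : -1 < b < 1 -> 2 * LI b = LI (b ^ 2).
Proof.
intros Hb.
assert (Hb2 : -1 < b ^ 2 < 1) by nra.
assert (Hc := fun x => Dq_ln_cont b x Hb).
assert (Hp : forall x, ln (Dq b (x + 2 * PI)) = ln (Dq b x)) by (intros; rewrite Dq_period; auto).
unfold LI.
replace (2 * RInt (fun w : R => ln (Dq b w)) 0 (2 * PI)) with
  (RInt (fun w : R => ln (Dq b w)) 0 (2 * PI) + RInt (fun w : R => ln (Dq b (w + PI))) 0 (2 * PI)).
2:{ rewrite (RInt_shift (fun w => ln (Dq b w)) PI Hc Hp). ring. }
rewrite <- RInt_plus_R.
2: apply ex_RInt_cont, Hc.
2:{ apply ex_RInt_cont. intros x. apply (continuous_comp (fun w => w + PI) (fun w => ln (Dq b w))).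
    apply (@ex_derive_continuous R_AbsRing R_NormedModule). auto_derive. auto. apply Hc. }
rewrite (RInt_ext _ (fun w => ln (Dq (b ^ 2) (2 * w)))).
2:{ intros x _. rewrite <- ln_mult by (apply Dq_pos; auto). rewrite Dq_prod. reflexivity. }
apply (RInt_double (fun w => ln (Dq (b ^ 2) w))).
- intros x. apply Dq_ln_cont; auto.
- intros; rewrite Dq_period; auto.
Qed.

Fixpoint bs (b : R) (n : nat) : R := match n with O => b | S m => (bs b m) ^ 2 end.

Lemma bs_bound b n : -1 < b < 1 -> Rabs (bs b n) <= Rabs b.
Proof.
intros Hb. assert (Rabs b < 1) by (apply Rabs_def1; lra).
induction n. simpl; lra.
change (bs b (S n)) with (bs b n ^ 2).
rewrite <- RPow_abs. assert (0 <= Rabs (bs b n)) by apply Rabs_pos. nra.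
Qed.

Lemma LI_iter b n : -1 < b < 1 -> LI b = LI (bs b n) / 2 ^ n.
Proof.
intros Hb. induction n. simpl. field.
assert (Rabs b < 1) by (apply Rabs_def1; lra).
assert (Hbb := bs_bound b n Hb).
assert (Hn : -1 < bs b n < 1) by (assert (Rabs (bs b n) < 1) as H0 by lra; apply Rabs_def2 in H0; lra).
rewrite IHn. change (bs b (S n)) with (bs b n ^ 2). rewrite <- (L_half _ Hn). simpl. field. apply pow_nonzero. lra.
Qed.

Lemma INR_lt_pow2 n : INR n < 2 ^ n.
Proof.
induction n. simpl. lra. rewrite S_INR. simpl.
assert (1 <= 2 ^ n) by (apply pow_R1_Rle; lra). lra.
Qed.

Lemma LI_zero b : -1 < b < 1 -> LI b = 0.
Proof.
intros Hb.
assert (Hb1 : Rabs b < 1) by (apply Rabs_def1; lra).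
set (M := ln 4 - ln ((1 - Rabs b) ^ 2)).
assert (Hpos : 0 < (1 - Rabs b) ^ 2) by (apply pow_lt; lra).
assert (Hbound : forall c, Rabs c <= Rabs b -> forall w, Rabs (ln (Dq c w)) <= M).
{ intros c Hcb w.
  assert (Hc : -1 < c < 1) by (assert (Rabs c < 1) as H0 by lra; apply Rabs_def2 in H0; lra).
  destruct (Dq_bounds c w Hc) as [H1 H2].
  assert (0 <= Rabs c) by apply Rabs_pos.
  assert (Hl1 : ln ((1 - Rabs b) ^ 2) <= ln (Dq c w)) by (apply ln_le; auto; nra).
  assert (Hl2 : ln (Dq c w) <= ln 4) by (apply ln_le; [apply Dq_pos; auto| nra]).
  assert (Hl3 : ln ((1 - Rabs b) ^ 2) <= 0).
  { rewrite <- ln_1. apply ln_le; auto. assert (0 <= Rabs b) by apply Rabs_pos. nra. }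
  assert (Hl4 : 0 <= ln 4) by (rewrite <- ln_1; apply ln_le; lra).
  unfold M. apply Rabs_le. lra. }
assert (HM : forall n, Rabs (LI b) <= 2 * PI * M / 2 ^ n).
{ intros n. rewrite (LI_iter b n Hb). unfold Rdiv. rewrite Rabs_mult.
  rewrite (Rabs_pos_eq (/ 2 ^ n)) by (apply Rlt_le, Rinv_0_lt_compat, pow_lt; lra).
  apply Rmult_le_compat_r. apply Rlt_le, Rinv_0_lt_compat, pow_lt; lra.
  unfold LI. replace (2 * PI * M) with ((2 * PI - 0) * M) by ring.
  assert (Hn : -1 < bs b n < 1) by (assert (H := bs_bound b n Hb); assert (Rabs (bs b n) < 1) as H0 by lra; apply Rabs_def2 in H0; lra).
  apply abs_RInt_le_const.
  - assert (PI > 0) by apply PI_RGT_0. lra.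
  - apply ex_RInt_cont. intros; apply Dq_ln_cont; auto.
  - intros t _. apply Hbound. apply bs_bound; auto. }
destruct (Req_dec (LI b) 0) as [E|E]; auto. exfalso.
assert (HL : 0 < Rabs (LI b)) by (apply Rabs_pos_lt; auto).
destruct (archimed (2 * PI * M / Rabs (LI b))) as [Ha _].
set (n := Z.abs_nat (up (2 * PI * M / Rabs (LI b)))).
assert (Hn : 2 * PI * M / Rabs (LI b) < INR n).
{ unfold n. rewrite INR_IZR_INZ, Zabs2Nat.id_abs, abs_IZR.
  pose proof (Rle_abs (IZR (up (2 * PI * M / Rabs (LI b))))). lra. }
assert (H2 := INR_lt_pow2 n).
assert (H3 := HM n).
assert (Hp : 0 < 2 ^ n) by (apply pow_lt; lra).
assert (2 * PI * M < Rabs (LI b) * 2 ^ n).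
{ apply (Rmult_lt_compat_r (Rabs (LI b))) in Hn; auto.
  unfold Rdiv in Hn. rewrite Rmult_assoc, Rinv_l in Hn by lra. nra. }
apply (Rmult_le_compat_r (2 ^ n)) in H3; [|lra].
unfold Rdiv in H3. rewrite Rmult_assoc, Rinv_l in H3 by lra. lra.
Qed.

Definition sA g a := 1 + a ^ 2 + g * (1 - a ^ 2).
Definition cA g a := (sA g a + sqrt (sA g a ^ 2 - 4 * a ^ 2)) / 2.
Definition Kt g r := / 2 * (ln r - g * (r - 1) / (1 + g - (1 - g) * r)).
Definition Tr g r := (1 + g - r) * r / (1 - (1 - g) * r).

Lemma cA_props g a : 0 < g < 1 -> 0 <= a < 1 ->
  1 < cA g a <= 1 + g /\ cA g a ^ 2 - sA g a * cA g a + a ^ 2 = 0 /\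
  0 < sA g a ^ 2 - 4 * a ^ 2.
Proof.
intros Hg Ha. unfold cA.
assert (Ha2 : 0 < 1 - a ^ 2) by nra.
assert (Hq : 0 < g * (1 - a ^ 2)) by (apply Rmult_lt_0_compat; lra).
assert (Hs : sA g a - 2 * a > 0) by (unfold sA; nra).
assert (Hs2 : sA g a + 2 * a > 0) by (unfold sA; nra).
assert (HX : 0 < sA g a ^ 2 - 4 * a ^ 2) by nra.
set (U := sqrt (sA g a ^ 2 - 4 * a ^ 2)).
assert (HU : U * U = sA g a ^ 2 - 4 * a ^ 2) by (apply sqrt_sqrt; lra).
assert (HU0 : 0 < U) by (apply sqrt_lt_R0; lra).
assert (Hs3 : sA g a <= 2) by (unfold sA; nra).
unfold sA in *. split; [split|split]; try lra.
- destruct (Rle_lt_dec (1 + a ^ 2 + g * (1 - a ^ 2)) 2).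
  + assert (U > 2 - (1 + a ^ 2 + g * (1 - a ^ 2))); [|lra].
    apply Rnot_le_lt; intro. nra.
  + nra.
- assert (U <= 2 * (1 + g) - (1 + a ^ 2 + g * (1 - a ^ 2))); [|lra].
  apply Rnot_lt_le; intro. assert (0 <= a ^ 2) by nra.
  assert (0 <= 2 * (1 + g) - (1 + a ^ 2 + g * (1 - a ^ 2))) by nra. nra.
Qed.

Lemma E_pos g r : 0 < g < 1 -> r <= 1 + g -> 1 - (1 - g) * r > 0 /\ 1 + g - (1 - g) * r > 0.
Proof. intros. split; nra. Qed.

Lemma Tr_cA g a : 0 < g < 1 -> 0 <= a < 1 -> Tr g (cA g a) = a ^ 2.
Proof.
intros Hg Ha. destruct (cA_props g a Hg Ha) as [[H1 H2] [H3 _]].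
destruct (E_pos g (cA g a) Hg H2) as [Hd _].
unfold Tr. unfold sA in H3. set (c := cA g a) in *.
apply (Rmult_eq_reg_r (1 - (1 - g) * c)); [|lra].
unfold Rdiv. rewrite Rmult_assoc, Rinv_l by lra. nra.
Qed.

Lemma is_RInt_plus_R (f g : R -> R) a b l1 l2 : is_RInt f a b l1 -> is_RInt g a b l2 ->
  is_RInt (fun x => f x + g x) a b (l1 + l2).
Proof. intros H1 H2. apply (is_RInt_plus f g a b l1 l2 H1 H2). Qed.
Lemma is_RInt_minus_R (f g : R -> R) a b l1 l2 : is_RInt f a b l1 -> is_RInt g a b l2 ->
  is_RInt (fun x => f x - g x) a b (l1 - l2).
Proof. intros H1 H2. apply (is_RInt_minus f g a b l1 l2 H1 H2). Qed.
Lemma is_RInt_scal_R (f : R -> R) a b k l : is_RInt f a b l ->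
  is_RInt (fun x => k * f x) a b (k * l).
Proof. intros H1. apply (is_RInt_scal f a b k l H1). Qed.
Lemma is_RInt_const_R a b (v : R) : is_RInt (fun _ => v) a b ((b - a) * v).
Proof. apply (is_RInt_const a b v). Qed.

Lemma is_RInt_ln b : -1 < b < 1 -> is_RInt (fun w => ln (Dq b w)) 0 (2 * PI) 0.
Proof.
intros Hb.
assert (H : is_RInt (fun w => ln (Dq b w)) 0 (2 * PI) (LI b)).
{ unfold LI. apply (RInt_correct (V := R_CompleteNormedModule)). apply ex_RInt_cont. intros; apply Dq_ln_cont; auto. }
rewrite (LI_zero b Hb) in H. exact H.
Qed.

Lemma KL_point Pi0 s2 a w : 0 < Pi0 -> 0 < s2 -> Pi0 / s2 < 1 -> 0 <= a < 1 ->
  KL_gauss s2 (Sy Pi0 s2 a w) =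
  / 2 * (- (Pi0 / s2 * (1 - a ^ 2) / cA (Pi0 / s2) a) * / Dq (a / cA (Pi0 / s2) a) w
         + ln (cA (Pi0 / s2) a) + ln (Dq (a / cA (Pi0 / s2) a) w) - ln (Dq a w)).
Proof.
intros HP Hs Hg1 Ha.
assert (Hg : 0 < Pi0 / s2 < 1) by (split; auto; apply Rdiv_lt_0_compat; auto).
destruct (cA_props _ a Hg Ha) as [[H1 H2] [H3 _]].
set (g := Pi0 / s2) in *. set (c := cA g a) in *.
assert (Hb : -1 < a / c < 1).
{ split. assert (0 <= a / c) by (apply Rdiv_le_0_compat; lra). lra.
  apply (Rmult_lt_reg_r c); [lra|]. unfold Rdiv. rewrite Rmult_assoc, Rinv_l by lra. lra. }
assert (Ha' : -1 < a < 1) by lra.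
assert (HDa := Dq_pos a w Ha'). assert (HDb := Dq_pos (a / c) w Hb).
assert (Key : Dq a w + g * (1 - a ^ 2) = c * Dq (a / c) w).
{ unfold Dq. unfold sA in H3. field_simplify_eq; [|lra]. nra. }
assert (HPi : Pi0 = g * s2) by (unfold g; field; lra).
assert (HSy : s2 / Sy Pi0 s2 a w = Dq a w / (c * Dq (a / c) w)).
{ assert (Hcb : 0 < c * Dq (a/c) w) by (apply Rmult_lt_0_compat; lra).
  unfold Sy. rewrite <- Key. fold (Dq a w). rewrite HPi. field. repeat split; try lra.
  replace (s2 * Dq a w + g*s2*(1-a^2)) with (s2 * (Dq a w + g*(1-a^2))) by ring.
  rewrite Key. apply Rgt_not_eq. apply Rmult_lt_0_compat; lra. }
unfold KL_gauss. rewrite HSy.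
rewrite ln_div by (try apply Rmult_lt_0_compat; lra).
rewrite ln_mult by lra.
apply (Rmult_eq_reg_l 2); [|lra].
assert (Hf : Dq a w / (c * Dq (a / c) w) - 1 = - (g * (1 - a ^ 2) / c) * / Dq (a / c) w).
{ replace (Dq a w) with (c * Dq (a / c) w - g * (1 - a ^ 2)) by lra. field. split; lra. }
rewrite Hf. ring.
Qed.

Lemma Kexp_closed Pi0 s2 a : 0 < Pi0 -> 0 < s2 -> Pi0 / s2 < 1 -> 0 <= a < 1 ->
  Kexp Pi0 s2 a = Kt (Pi0 / s2) (cA (Pi0 / s2) a).
Proof.
intros HP Hs Hg1 Ha.
assert (Hg : 0 < Pi0 / s2 < 1) by (split; auto; apply Rdiv_lt_0_compat; auto).
destruct (cA_props _ a Hg Ha) as [[H1 H2] [H3 _]].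
assert (HT := Tr_cA _ a Hg Ha).
assert (Hint : is_RInt (fun w => KL_gauss s2 (Sy Pi0 s2 a w)) 0 (2 * PI)
  (/ 2 * (- (Pi0 / s2 * (1 - a ^ 2) / cA (Pi0 / s2) a) * (2 * PI / (1 - (a / cA (Pi0 / s2) a) ^ 2))
          + (2 * PI - 0) * ln (cA (Pi0 / s2) a) + 0 - 0))).
{ set (g := Pi0 / s2) in *. set (c := cA g a) in *.
  assert (Hb : -1 < a / c < 1).
  { split. assert (0 <= a / c) by (apply Rdiv_le_0_compat; lra). lra.
    apply (Rmult_lt_reg_r c); [lra|]. unfold Rdiv. rewrite Rmult_assoc, Rinv_l by lra. lra. }
  apply (is_RInt_ext (fun w => / 2 * (- (g * (1 - a ^ 2) / c) * / Dq (a / c) w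
         + ln c + ln (Dq (a / c) w) - ln (Dq a w)))).
  { intros x _. unfold g, c. rewrite KL_point; auto. }
  apply is_RInt_scal_R. apply is_RInt_minus_R. apply is_RInt_plus_R. apply is_RInt_plus_R.
  - apply is_RInt_scal_R. apply pois. auto.
  - apply is_RInt_const_R.
  - apply is_RInt_ln. auto.
  - apply is_RInt_ln. lra. }
unfold Kexp. rewrite (is_RInt_unique _ _ _ _ Hint).
set (g := Pi0 / s2) in *. set (c := cA g a) in *.
assert (HPI := PI_RGT_0).
replace ((a / c) ^ 2) with (a ^ 2 / c ^ 2) by (field; lra).
rewrite <- HT. unfold Kt, Tr.
destruct (E_pos g c Hg H2) as [Hd HE].
field. repeat split; try lra.
replace ((1 - (1 - g) * c) * c - (1 + g - c)) with ((c - 1) * (1 + g - (1 - g) * c)) by ring.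
apply Rgt_not_eq. apply Rmult_lt_0_compat; lra.
Qed.

Definition Ef g r := 1 + g - (1 - g) * r.
Definition wg g := sqrt (1 - (1 - g ^ 2) ^ 2).
Definition rm g := (1 + g) ^ 2 / (1 + wg g).

Lemma wg_props g : 0 < g < 1 -> wg g ^ 2 = 2 * g ^ 2 - g ^ 4 /\ g < wg g < g * (2 + g).
Proof.
intros Hg. unfold wg.
assert (Hg2 : 0 < 1 - g ^ 2 < 1) by (split; nra).
assert (H0 : 0 < 1 - (1 - g ^ 2) ^ 2) by nra.
assert (HW : sqrt (1 - (1 - g ^ 2) ^ 2) ^ 2 = 1 - (1 - g ^ 2) ^ 2) by (apply pow2_sqrt; lra).
assert (HW0 : 0 < sqrt (1 - (1 - g ^ 2) ^ 2)) by (apply sqrt_lt_R0; lra).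
set (W := sqrt (1 - (1 - g ^ 2) ^ 2)) in *.
split. rewrite HW. ring.
split.
- apply Rnot_le_lt. intro. assert (W ^ 2 <= g ^ 2) by nra. nra.
- apply Rnot_le_lt. intro. assert (g * (2 + g) > 0) by nra. nra.
Qed.

Lemma rm_props g : 0 < g < 1 ->
  1 < rm g < 1 + g /\ Ef g (rm g) > 0 /\ Ef g (rm g) ^ 2 = 2 * g ^ 2 * rm g.
Proof.
intros Hg. destruct (wg_props g Hg) as [HW [HW1 HW2]].
unfold rm, Ef. set (W := wg g) in *.
assert (H1W : 0 < 1 + W) by lra.
assert (HE : 1 + g - (1 - g) * ((1 + g) ^ 2 / (1 + W)) = (1 + g) * (g ^ 2 + W) / (1 + W)) by (field; lra).
rewrite HE.
split; [split|split].
- apply (Rmult_lt_reg_r (1 + W)); auto. unfold Rdiv. rewrite Rmult_assoc, Rinv_l by lra. nra.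
- apply (Rmult_lt_reg_r (1 + W)); auto. unfold Rdiv. rewrite Rmult_assoc, Rinv_l by lra. nra.
- apply Rdiv_lt_0_compat; nra.
- field_simplify_eq; [|lra].
  assert (HW4 : W ^ 4 = (W^2)^2) by ring. assert (HW3 : W ^ 3 = W^2 * W) by ring.
  rewrite ?HW4, ?HW3, HW. ring.
Qed.

Definition dK g r := / 2 * (/ r - 2 * g ^ 2 / Ef g r ^ 2).

Lemma Kt_der g r : 0 < r -> Ef g r <> 0 -> is_derive (Kt g) r (dK g r).
Proof.
intros Hr HE. unfold Kt, dK, Ef in *. auto_derive.
all: try (repeat split; auto; lra).
field. split; lra.
Qed.

Lemma Kt_incr g x y : 0 < g < 1 -> 1 <= x -> x < y -> y <= rm g -> Kt g x < Kt g y.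
Proof.
intros Hg Hx Hxy Hy. destruct (rm_props g Hg) as [[H1 H2] [H3 H4]].
destruct (MVT_cor2 (Kt g) (dK g) x y Hxy) as [c [Hc1 Hc2]].
{ intros c Hc. apply is_derive_Reals. apply Kt_der. lra. unfold Ef in *. nra. }
assert (dK g c > 0).
{ unfold dK, Ef in *. set (r := rm g) in *.
  assert (HEc : 1 + g - (1 - g) * c > 1 + g - (1 - g) * r) by nra.
  assert (HE2 : (1 + g - (1 - g) * c) ^ 2 > 2 * g ^ 2 * c) by nra.
  assert (0 < c) by lra.
  assert (2 * g ^ 2 / (1 + g - (1 - g) * c) ^ 2 < / c).
  { apply (Rmult_lt_reg_r ((1 + g - (1 - g) * c) ^ 2 * c)). nra.
    replace (2 * g ^ 2 / (1 + g - (1 - g) * c) ^ 2 * ((1 + g - (1 - g) * c) ^ 2 * c)) with (2 * g ^ 2 * c) by (field; nra).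
    replace (/ c * ((1 + g - (1 - g) * c) ^ 2 * c)) with ((1 + g - (1 - g) * c) ^ 2) by (field; nra). lra. }
  lra. }
nra.
Qed.

Lemma Kt_decr g x y : 0 < g < 1 -> rm g <= x -> x < y -> y <= 1 + g -> Kt g y < Kt g x.
Proof.
intros Hg Hx Hxy Hy. destruct (rm_props g Hg) as [[H1 H2] [H3 H4]].
destruct (MVT_cor2 (Kt g) (dK g) x y Hxy) as [c [Hc1 Hc2]].
{ intros c Hc. apply is_derive_Reals. apply Kt_der. lra. unfold Ef in *. nra. }
assert (dK g c < 0).
{ unfold dK, Ef in *. set (r := rm g) in *.
  assert (HEc : 1 + g - (1 - g) * c < 1 + g - (1 - g) * r) by nra.
  assert (HEc0 : 1 + g - (1 - g) * c > 0) by nra.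
  assert (HE2 : (1 + g - (1 - g) * c) ^ 2 < 2 * g ^ 2 * c) by nra.
  assert (0 < c) by lra.
  assert (2 * g ^ 2 / (1 + g - (1 - g) * c) ^ 2 > / c).
  { apply (Rmult_lt_reg_r ((1 + g - (1 - g) * c) ^ 2 * c)). nra.
    replace (2 * g ^ 2 / (1 + g - (1 - g) * c) ^ 2 * ((1 + g - (1 - g) * c) ^ 2 * c)) with (2 * g ^ 2 * c) by (field; nra).
    replace (/ c * ((1 + g - (1 - g) * c) ^ 2 * c)) with ((1 + g - (1 - g) * c) ^ 2) by (field; nra). lra. }
  lra. }
nra.
Qed.

Lemma Kt_max g r : 0 < g < 1 -> 1 <= r <= 1 + g -> r <> rm g -> Kt g r < Kt g (rm g).
Proof.
intros Hg Hr Hne. destruct (rm_props g Hg) as [[H1 H2] _].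
destruct (Rlt_or_le r (rm g)).
- apply Kt_incr; lra.
- apply Kt_decr; lra.
Qed.

Lemma Tr_decr g x y : 0 < g < 1 -> 1 <= x -> x < y -> y <= 1 + g -> Tr g y < Tr g x.
Proof.
intros Hg Hx Hxy Hy. unfold Tr.
assert (Hdx : 1 - (1 - g) * x > 0) by nra.
assert (Hdy : 1 - (1 - g) * y > 0) by nra.
apply (Rmult_lt_reg_r ((1 - (1 - g) * x) * (1 - (1 - g) * y))). nra.
field_simplify; [|lra|lra].
assert (x + y - (1 + g) - (1 - g) * x * y > 0).
{ assert ((x - 1) * (1 - (1 - g) * y) >= 0) by nra. nra. }
nra.
Qed.

Lemma Tr_inj g x y : 0 < g < 1 -> 1 <= x <= 1 + g -> 1 <= y <= 1 + g -> Tr g x = Tr g y -> x = y.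
Proof.
intros Hg Hx Hy E. destruct (Rtotal_order x y) as [H|[H|H]]; auto.
- assert (Tr g y < Tr g x) by (apply Tr_decr; lra). lra.
- assert (Tr g x < Tr g y) by (apply Tr_decr; lra). lra.
Qed.

Lemma Tr_range g r : 0 < g < 1 -> 1 < r < 1 + g -> 0 < Tr g r < 1.
Proof.
intros Hg Hr. unfold Tr.
assert (Hd : 1 - (1 - g) * r > 0) by nra.
split.
- apply Rdiv_lt_0_compat; nra.
- apply (Rmult_lt_reg_r (1 - (1 - g) * r)); auto. unfold Rdiv. rewrite Rmult_assoc, Rinv_l by lra. nra.
Qed.

Lemma re_v_eq Pi0 s2 a : 0 < s2 -> re_v Pi0 s2 a = cA (Pi0 / s2) a.
Proof.
intros Hs. unfold re_v, Re_v, Pv, Qv, cA, sA.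
set (g := Pi0 / s2).
assert (HPi : Pi0 = g * s2) by (unfold g; field; lra).
rewrite HPi.
replace ((s2 * (1 - a ^ 2) - g * s2 * (1 - a ^ 2)) ^ 2 + 4 * s2 * (g * s2 * (1 - a ^ 2)))
  with (s2 ^ 2 * ((1 + a ^ 2 + g * (1 - a ^ 2)) ^ 2 - 4 * a ^ 2)) by ring.
rewrite sqrt_mult_alt by nra. rewrite sqrt_pow2 by lra.
field. lra.
Qed.

Lemma Kexp_one Pi0 s2 : 0 < s2 -> Kexp Pi0 s2 1 = 0.
Proof.
intros Hs.
assert (H0 : forall x, KL_gauss s2 (Sy Pi0 s2 1 x) = 0).
{ intros x. unfold KL_gauss, Sy.
  replace (s2 + Pi0 * (1 - 1 ^ 2) / (1 - 2 * 1 * cos x + 1 ^ 2)) with s2 by (unfold Rdiv; ring).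
  rewrite Rdiv_diag by lra. rewrite ln_1. ring. }
unfold Kexp.
rewrite (RInt_ext _ (fun _ => 0)).
2:{ intros x _. apply H0. }
rewrite RInt_const. unfold scal; simpl; unfold mult; simpl. ring.
Qed.

Lemma Kt_one g : Kt g 1 = 0.
Proof. unfold Kt. rewrite ln_1. unfold Rdiv. ring. Qed.

Lemma lhs_Tr g r : 0 < g < 1 -> 1 < r < 1 + g ->
  (1 + Tr g r + g * (1 - Tr g r)) ^ 2 - 2 * (r + Tr g r ^ 2 / r)
  = (r - 1) ^ 2 * (Ef g r ^ 2 - 2 * g ^ 2 * r) / (1 - (1 - g) * r) ^ 2.
Proof.
intros Hg Hr. assert (1 - (1 - g) * r > 0) by nra.
unfold Tr, Ef. field. split; lra.
Qed.

Lemma Tr_rm_bound g : 0 < g <= 1 / 2 -> 1 - Tr g (rm g) < 4 * g.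
Proof.
intros Hg. assert (Hg' : 0 < g < 1) by lra.
destruct (rm_props g Hg') as [[H1 H2] [H3 H4]].
set (r := rm g) in *. unfold Ef in *.
assert (Hd : 1 - (1 - g) * r > 0) by nra.
assert (HT : 1 - Tr g r = (r - 1) ^ 2 / (1 - (1 - g) * r)) by (unfold Tr; field; lra).
rewrite HT.
set (E := 1 + g - (1 - g) * r) in *.
assert (HE1 : E > 7 / 5 * g) by (apply Rnot_le_lt; intro; nra).
assert (Hden : 1 - (1 - g) * r = E - g) by (unfold E; ring).
assert (Hx : (1 - g) * (r - 1) = 2 * g - E) by (unfold E; ring).
assert (Hx2 : r - 1 < 6 / 5 * g) by nra.
apply (Rmult_lt_reg_r (1 - (1 - g) * r)); auto.
unfold Rdiv. rewrite Rmult_assoc, Rinv_l by lra. rewrite Hden. nra.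
Qed.

Lemma opt_point g : 0 < g < 1 ->
  0 < sqrt (Tr g (rm g)) < 1 /\ sqrt (Tr g (rm g)) ^ 2 = Tr g (rm g) /\
  cA g (sqrt (Tr g (rm g))) = rm g.
Proof.
intros Hg. destruct (rm_props g Hg) as [[H1 H2] _].
destruct (Tr_range g (rm g) Hg (conj H1 H2)) as [T1 T2].
assert (Ha2 : sqrt (Tr g (rm g)) ^ 2 = Tr g (rm g)) by (apply pow2_sqrt; lra).
assert (Ha0 : 0 < sqrt (Tr g (rm g))) by (apply sqrt_lt_R0; lra).
set (am := sqrt (Tr g (rm g))) in *.
assert (Ham : 0 < am < 1) by (split; auto; nra).
split; auto. split; auto.
destruct (cA_props g am Hg ltac:(lra)) as [[C1 C2] _].
apply (Tr_inj g); try lra.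
rewrite Tr_cA by lra. auto.
Qed.

Lemma Kexp_bound Pi0 s2 a : 0 < Pi0 -> 0 < s2 -> Pi0 / s2 < 1 -> 0 <= a <= 1 ->
  Kexp Pi0 s2 a <= Kt (Pi0 / s2) (rm (Pi0 / s2)) /\
  (a < 1 -> Kexp Pi0 s2 a = Kt (Pi0 / s2) (rm (Pi0 / s2)) -> cA (Pi0 / s2) a = rm (Pi0 / s2)).
Proof.
intros HP Hs Hg1 Ha.
assert (Hg : 0 < Pi0 / s2 < 1) by (split; auto; apply Rdiv_lt_0_compat; auto).
destruct (rm_props _ Hg) as [[H1 H2] _].
assert (Hpos : Kt (Pi0 / s2) 1 < Kt (Pi0 / s2) (rm (Pi0 / s2))) by (apply Kt_incr; lra).
rewrite Kt_one in Hpos.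
destruct (Req_dec a 1) as [E|E].
- subst a. rewrite Kexp_one by auto. split. lra. intros; lra.
- rewrite Kexp_closed by (auto; lra).
  destruct (cA_props (Pi0 / s2) a Hg ltac:(lra)) as [[C1 C2] _].
  destruct (Req_dec (cA (Pi0 / s2) a) (rm (Pi0 / s2))) as [E2|E2].
  + rewrite E2. split; [lra| auto].
  + assert (Kt (Pi0 / s2) (cA (Pi0 / s2) a) < Kt (Pi0 / s2) (rm (Pi0 / s2))) by (apply Kt_max; auto; lra).
    split; [lra| intros; lra].
Qed.

Theorem theorem4 :
  (forall Pi0 sigma2 : R, 0 < Pi0 -> 0 < sigma2 -> Pi0 / sigma2 < 1 ->
     exists am : R,
       0 < am < 1 /\
       (forall a : R, 0 <= a <= 1 -> Kexp Pi0 sigma2 a <= Kexp Pi0 sigma2 am) /\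
       opt_eq_lhs Pi0 sigma2 am = 0 /\
       (forall A : R, 0 < A ->
          0 < - ln am / A /\
          (forall Delta : R, 0 <= Delta ->
             Kexp Pi0 sigma2 (exp (- A * Delta))
             <= Kexp Pi0 sigma2 (exp (- A * (- ln am / A))))))
  /\
  (forall eps : R, 0 < eps ->
     exists delta : R, 0 < delta /\
       forall Pi0 sigma2 : R, 0 < Pi0 -> 0 < sigma2 -> Pi0 / sigma2 < delta ->
         forall am : R, 0 <= am <= 1 ->
           (forall a : R, 0 <= a <= 1 -> Kexp Pi0 sigma2 a <= Kexp Pi0 sigma2 am) ->
           1 - eps < am).
Proof.
split.
- intros Pi0 s2 HP Hs Hg1.
  assert (Hg : 0 < Pi0 / s2 < 1) by (split; auto; apply Rdiv_lt_0_compat; auto).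
  destruct (opt_point _ Hg) as [Ham [Ham2 Hc]].
  set (am := sqrt (Tr (Pi0 / s2) (rm (Pi0 / s2)))) in *.
  assert (HKam : Kexp Pi0 s2 am = Kt (Pi0 / s2) (rm (Pi0 / s2))).
  { rewrite Kexp_closed by (auto; lra). rewrite Hc. reflexivity. }
  assert (Hmax : forall a, 0 <= a <= 1 -> Kexp Pi0 s2 a <= Kexp Pi0 s2 am).
  { intros a Ha. rewrite HKam. apply Kexp_bound; auto. }
  exists am. split; auto. split; auto. split.
  + unfold opt_eq_lhs. rewrite re_v_eq by auto. rewrite Hc.
    replace (am ^ 4) with ((am ^ 2) ^ 2) by ring. rewrite Ham2.
    destruct (rm_props _ Hg) as [[H1 H2] [H3 H4]].
    rewrite lhs_Tr by (auto; lra). rewrite H4. unfold Rdiv. ring.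
  + intros A HA.
    assert (Hln : ln am < 0) by (rewrite <- ln_1; apply ln_increasing; lra).
    split.
    * apply Rdiv_lt_0_compat; lra.
    * intros Delta HD.
      replace (- A * (- ln am / A)) with (ln am) by (field; lra).
      rewrite exp_ln by lra.
      apply Hmax. split. apply Rlt_le, exp_pos.
      destruct (Req_dec Delta 0) as [E|E].
      -- subst. replace (- A * 0) with 0 by ring. rewrite exp_0. lra.
      -- rewrite <- exp_0. apply Rlt_le, exp_increasing. nra.
- intros eps Heps.
  exists (Rmin (1 / 2) (eps / 4)). split.
  { apply Rmin_glb_lt; lra. }
  intros Pi0 s2 HP Hs Hgd am Ham Hmax.
  assert (Hm1 := Rmin_l (1 / 2) (eps / 4)). assert (Hm2 := Rmin_r (1 / 2) (eps / 4)).
  assert (Hg0 : 0 < Pi0 / s2) by (apply Rdiv_lt_0_compat; auto).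
  assert (Hg : 0 < Pi0 / s2 < 1) by lra.
  destruct (Req_dec am 1) as [E|E]. lra.
  destruct (opt_point _ Hg) as [Hs1 [Hs2 Hc]].
  assert (HK1 : Kexp Pi0 s2 (sqrt (Tr (Pi0 / s2) (rm (Pi0 / s2)))) = Kt (Pi0 / s2) (rm (Pi0 / s2))).
  { rewrite Kexp_closed by (auto; lra). rewrite Hc. reflexivity. }
  assert (HK2 := Hmax _ (ltac:(lra) : 0 <= sqrt (Tr (Pi0 / s2) (rm (Pi0 / s2))) <= 1)).
  destruct (Kexp_bound Pi0 s2 am HP Hs ltac:(lra) Ham) as [B1 B2].
  assert (Hcam : cA (Pi0 / s2) am = rm (Pi0 / s2)) by (apply B2; lra).
  assert (HT := Tr_cA (Pi0 / s2) am Hg ltac:(lra)). rewrite Hcam in HT.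
  assert (Hb := Tr_rm_bound (Pi0 / s2) ltac:(lra)).
  rewrite HT in Hb. nra.
Qed.
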